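(* Let $I$ be a $P$-interval of $\mathcal{P}$ with $|I|\geq 2$ and $D(I)=\{x_1,\ldots,x_r\}$. Then $I$ is a $b$-nested common interval if and only if there is some $i$ with $1\leq i\leq r$ such that $Int(x_i)$ is a $b$-nested common interval of size at least $|I|-b$.
   Context: Let $n\geq 1$, $K\geq 1$ and let $\mathcal{P}=\{P_1,\ldots,P_K\}$ be permutations of $\{1,\ldots,n\}$ with $P_1=(1,2,\ldots,n)$. For integers $i\leq j$ write $(i..j)=\{i,\ldots,j\}$. A common interval of $\mathcal{P}$ is a set of integers occupying consecutive positions in every $P_k$; all have the form $(i..j)$, and singletons and $(1..n)$ are common. Fix a positive integer $b$. A common interval $I$ is $b$-small if $|I|\leq b$, $b$-large otherwise; it is $b$-nested if $|I|=1$ or $I$ strictly contains a $b$-nested common interval $J$ with $|J|\geq|I|-b$ (recursive on size). Two intervals $(i..j)$, $(k..l)$ overlap if $i<k\leq j<l$ or $k<i\leq l<j$. A common interval is strong if it overlaps no other common interval. The PQ-tree $T$: nodes are the strong common intervals ($Int(x)$ is the interval of node $x$), root $(1..n)$, leaves the singletons, parent of $y$ is the node whose interval is the smallest strong common interval strictly containing $Int(y)$. A node $x$ with children set $D$ is a $P$-node if no union $\bigcup_{z\in D'}Int(z)$, $D'\subset D$, $2\leq|D'|<|D|$, is common; otherwise it is a $Q$-node with children ordered $y_1,\ldots,y_r$ so that $\max Int(y_i)+1=\min Int(y_{i+1})$. It is known that a set is a common interval iff it is $Int(x)$ for a node $x$ or the union of the intervals of consecutive children of a unique $Q$-node. The domain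 $D(I)$ of a common interval $I$ is the set of children of $x$ if $I=Int(x)$ is strong, and otherwise the set of consecutive children of the $Q$-node whose intervals have union $I$. A $P$-interval is a strong common interval $Int(x)$ with $x$ a $P$-node; all other common intervals are $Q$-intervals. *)

(* Defs.v *)
(* Elements {1..n} are modelled as 'I_n (0-based). *)
From mathcomp Require Import all_boot fingroup perm.
Set Implicit Arguments. Unset Strict Implicit. Unset Printing Implicit Defensive.

Section CommonIntervals.
Variable n : nat.
(* A permutation P_k is a bijection positions -> elements:
   position i holds element (p i). *)
Variable Ps : seq {perm 'I_n}.

Definition consecutive (p : {perm 'I_n}) (S : {set 'I_n}) : bool :=
  (S != set0) &&
  [forall i : 'I_n, forall j : 'I_n, forall k : 'I_n,
     [&& p i \in S, p j \in S & (i <= k <= j)%N] ==> (p k \in S)].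

Definition common (S : {set 'I_n}) : bool := all (fun p => consecutive p S) Ps.

Definition itv (i j : nat) : {set 'I_n} := [set x : 'I_n | (i <= x <= j)%N].

Definition overlap (I J : {set 'I_n}) : bool :=
  [exists i : 'I_n, exists j : 'I_n, exists k : 'I_n, exists l : 'I_n,
     [&& (i <= j)%N, (k <= l)%N, I == itv i j, J == itv k l &
         ((i < k <= j)%N && (j < l)%N) || ((k < i <= l)%N && (l < j)%N)]].

Definition strong (I : {set 'I_n}) : bool :=
  common I && [forall J : {set 'I_n}, common J ==> ~~ overlap I J].

(* X is the parent of Y in the PQ-tree: X is the smallest strong common
   interval strictly containing the strong interval Y *)
Definition child (X Y : {set 'I_n}) : bool :=
  [&& strong X, strong Y, Y \proper X &
      [forall Z : {set 'I_n}, (strong Z && (Y \proper Z)) ==> (X \subset Z)]].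

Definition children (X : {set 'I_n}) : {set {set 'I_n}} := [set Y | child X Y].

Definition Pnode (X : {set 'I_n}) : bool :=
  [forall D' : {set {set 'I_n}},
     [&& D' \subset children X, 2 <= #|D'| & #|D'| < #|children X|] ==>
     ~~ common (\bigcup_(Y in D') Y)].

Definition P_interval (I : {set 'I_n}) : bool := strong I && Pnode I.

Fixpoint nestedn (b m : nat) (I : {set 'I_n}) : bool :=
  match m with
  | 0 => false
  | m'.+1 => (#|I| == 1) ||
      [exists J : {set 'I_n},
         [&& common J, J \proper I, (#|I| - b <= #|J|)%N & nestedn b m' J]]
  end.

Definition nested (b : nat) (I : {set 'I_n}) : bool := nestedn b #|I| I.

End CommonIntervals.

(* Main.v *)
Require Import Defs.
From mathcomp Require Import all_boot fingroup perm zify.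
Set Implicit Arguments. Unset Strict Implicit. Unset Printing Implicit Defensive.

Definition conv n (S : {set 'I_n}) :=
  forall i j k : 'I_n, i \in S -> j \in S -> (i <= k <= j)%N -> k \in S.

Lemma common_conv n (Ps : seq {perm 'I_n}) (K : (0 < size Ps)%N)
  (P1 : nth 1%g Ps 0 = 1%g) S : common Ps S -> (S != set0) /\ conv S.
Proof.
move=> /allP /(_ _ (mem_nth 1%g K)); rewrite P1 /consecutive.
move=> /andP[ne /forallP H]; split=> // i j k Hi Hj Hk.
move: (H i) => /forallP/(_ j)/forallP/(_ k)/implyP; rewrite !perm1; apply.
by rewrite Hi Hj Hk.
Qed.

Lemma conv_itv n (S : {set 'I_n}) : S != set0 -> conv S ->
  exists i j : 'I_n, (i <= j)%N /\ S = itv n i j.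
Proof.
move=> /set0Pn [x0 Sx0] cS.
case: (arg_minnP (fun x : 'I_n => val x) Sx0) => i Si imin.
case: (arg_maxnP (fun x : 'I_n => val x) Sx0) => j Sj jmax.
exists i, j; split; first exact: imin.
apply/setP => k; rewrite inE; apply/idP/idP.
  by move=> Sk; apply/andP; split; [exact: imin | exact: jmax].
by apply: cS.
Qed.

Lemma overlap_of n (S C : {set 'I_n}) x y z :
  S != set0 -> conv S -> C != set0 -> conv C ->
  x \in S -> x \in C -> y \in S -> y \notin C -> z \in C -> z \notin S ->
  overlap S C.
Proof.
move=> nS cS nC cC.
case: (conv_itv nS cS) => i [j [ij ->]].
case: (conv_itv nC cC) => k [l [kl ->]].
rewrite !inE => ? ? ? ? ? ?.
apply/existsP; exists i; apply/existsP; exists j; apply/existsP; exists k;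
apply/existsP; exists l.
rewrite ij kl !eqxx /=.
lia.
Qed.

Lemma single_common n (Ps : seq {perm 'I_n}) x : common Ps [set x].
Proof.
apply/allP => p _; rewrite /consecutive; apply/andP; split.
  by apply/set0Pn; exists x; rewrite inE.
apply/forallP=> i; apply/forallP=> j; apply/forallP=> k; apply/implyP.
rewrite !inE => /and3P[/eqP hi /eqP hj hk].
have eij : i = j by apply: (@perm_inj _ p); rewrite hi hj.
subst j; have -> : k = i by apply/val_inj => /=; lia.
by rewrite hi.
Qed.

Lemma single_noovl n (x : 'I_n) J : ~~ overlap [set x] J.
Proof.
apply/negP => /existsP[i /existsP[j /existsP[k /existsP[l /and5P[ij kl /eqP e1 _ H]]]]].
have : i \in [set x] by rewrite e1 inE leqnn ij.
have : j \in [set x] by rewrite e1 inE ij leqnn.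
rewrite !inE => /eqP ej /eqP ei; move: H; rewrite ej ei; lia.
Qed.

Lemma single_strong n (Ps : seq {perm 'I_n}) x : strong Ps [set x].
Proof.
rewrite /strong single_common /=; apply/forallP => J; apply/implyP => _.
exact: single_noovl.
Qed.

Lemma strong_common n (Ps : seq {perm 'I_n}) X : strong Ps X -> common Ps X.
Proof. by case/andP. Qed.

Lemma laminar n (Ps : seq {perm 'I_n}) (K : (0 < size Ps)%N)
  (P1 : nth 1%g Ps 0 = 1%g) X Y z : strong Ps X -> common Ps Y ->
  z \in X -> z \in Y -> X \subset Y \/ Y \subset X.
Proof.
move=> sX cY zX zY.
case: (boolP (X \subset Y)) => [h|/subsetPn [y Xy nYy]]; [by left|right].
apply/subsetP => w Yw; apply/negPn/negP => nXw.
have [nX cvX] := common_conv K P1 (strong_common sX).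
have [nY cvY] := common_conv K P1 cY.
have ov : overlap X Y := overlap_of nX cvX nY cvY zX zY Xy nYy Yw nXw.
move: sX => /andP[_ /forallP/(_ Y)]; rewrite cY /= ov //.
Qed.

Lemma child_ex n (Ps : seq {perm 'I_n}) (K : (0 < size Ps)%N)
  (P1 : nth 1%g Ps 0 = 1%g) I (sI : strong Ps I) (HI2 : (2 <= #|I|)%N) x :
  x \in I -> exists2 C, C \in children Ps I & x \in C.
Proof.
move=> xI.
pose P := fun S : {set 'I_n} => [&& strong Ps S, x \in S & S \proper I].
have P0 : P [set x].
  rewrite /P single_strong inE eqxx /= properEcard sub1set xI cards1 /=.
  exact: HI2.
case: (arg_maxnP (fun S : {set 'I_n} => #|S|) P0) => S /and3P[sS xS SI] Smax.
exists S => //; rewrite inE /child sI sS SI /=.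
apply/forallP=> Z; apply/implyP=> /andP[sZ SZ].
have xZ : x \in Z := subsetP (proper_sub SZ) x xS.
case: (laminar K P1 sZ (strong_common sI) xZ xI) => [ZI|//].
case: (boolP (Z == I)) => [/eqP->//|nZI].
have PZ : P Z by rewrite /P sZ xZ properEneq nZI ZI.
have := Smax Z PZ; have := proper_card SZ; rewrite /=; lia.
Qed.

Lemma sub_child n (Ps : seq {perm 'I_n}) (K : (0 < size Ps)%N)
  (P1 : nth 1%g Ps 0 = 1%g) I (HI : P_interval Ps I) (HI2 : (2 <= #|I|)%N)
  J (cJ : common Ps J) (JI : J \proper I) :
  exists2 C, C \in children Ps I & J \subset C.
Proof.
case/andP: HI => sI pI.
case: (boolP [exists C in children Ps I, J \subset C]) =>
  [/existsP[C /andP[? ?]]|nex]; first by exists C.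
exfalso.
have nJC : forall C, C \in children Ps I -> ~~ (J \subset C).
  move=> C CI; apply/negP=> JC; move/negP: nex; apply.
  by apply/existsP; exists C; rewrite CI JC.
have [nJ0 cvJ] := common_conv K P1 cJ.
have JIs := proper_sub JI.
have chS : forall C, C \in children Ps I -> strong Ps C.
  by move=> C; rewrite inE => /and4P[].
pose D := [set C in children Ps I | C :&: J != set0].
have inD : forall y C, y \in J -> C \in children Ps I -> y \in C -> C \in D.
  move=> y C Jy CI Cy; rewrite inE CI /=; apply/set0Pn; exists y.
  by rewrite inE Cy Jy.
have JD : J = \bigcup_(C in D) C.
  apply/setP => y; apply/idP/idP.
    move=> Jy.
    case: (child_ex K P1 sI HI2 (subsetP JIs y Jy)) => C CI Cy.
    by apply/bigcupP; exists C => //; apply: (inD y).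
  move=> /bigcupP[C]; rewrite inE => /andP[CI /set0Pn[w]].
  rewrite inE => /andP[Cw Jw] Cy.
  have /subsetPn [v Jv nCv] := nJC C CI.
  case: (boolP (C \subset J)) => [CJ|/subsetPn[u Cu nJu]];
    first exact: (subsetP CJ y Cy).
  have [nC cvC] := common_conv K P1 (strong_common (chS C CI)).
  have ov : overlap C J := overlap_of nC cvC nJ0 cvJ Cw Jw Cu nJu Jv nCv.
  by move: (chS C CI) => /andP[_ /forallP/(_ J)]; rewrite cJ /= ov.
have subD : D \subset children Ps I by apply/subsetP => C; rewrite inE => /andP[].
suff key : [&& D \subset children Ps I, (2 <= #|D|)%N & (#|D| < #|children Ps I|)%N].
  by move: pI => /forallP/(_ D)/implyP/(_ key); rewrite -JD cJ.
rewrite subD /=; apply/andP; split.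
  case/set0Pn: nJ0 => y Jy.
  case: (child_ex K P1 sI HI2 (subsetP JIs y Jy)) => Cy CyI yCy.
  have /subsetPn [z Jz nCz] := nJC Cy CyI.
  case: (child_ex K P1 sI HI2 (subsetP JIs z Jz)) => Cz CzI zCz.
  have neq : Cy != Cz by apply/negP => /eqP e; move: nCz; rewrite e zCz.
  have : [set Cy; Cz] \subset D.
    apply/subsetP => C /set2P[->|->].
      exact: (inD y).
    exact: (inD z).
  by move/subset_leq_card; rewrite cards2 neq.
apply: proper_card; rewrite properE subD /=; apply/negP => chD.
have IJ : I \subset J.
  apply/subsetP => y Iy; case: (child_ex K P1 sI HI2 Iy) => C CI Cy.
  by rewrite JD; apply/bigcupP; exists C => //; exact: (subsetP chD C CI).
by move: JI; rewrite properE IJ andbF.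
Qed.

Lemma nestedn_S n (Ps : seq {perm 'I_n}) b m (J : {set 'I_n}) :
  nestedn Ps b m.+1 J = (#|J| == 1) ||
  [exists J' : {set 'I_n},
     [&& common Ps J', J' \proper J, (#|J| - b <= #|J'|)%N & nestedn Ps b m J']].
Proof. by []. Qed.

Lemma nestedn_step n (Ps : seq {perm 'I_n}) b m (J : {set 'I_n}) :
  (#|J| <= m)%N -> nestedn Ps b m.+1 J = nestedn Ps b m J.
Proof.
elim: m J => [|m IH] J HJ.
  move: HJ; rewrite leqn0 => /eqP J0; rewrite nestedn_S J0 /=.
  by apply/existsP => -[J']; rewrite /= !andbF.
rewrite nestedn_S [RHS]nestedn_S; congr (_ || _); apply: eq_existsb => J'.
case: (boolP (J' \proper J)) => pJ; last by rewrite /= andbF.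
rewrite IH //; have := proper_card pJ; lia.
Qed.

Lemma nestedn_fuel n (Ps : seq {perm 'I_n}) b m (J : {set 'I_n}) :
  (#|J| <= m)%N -> nestedn Ps b m J = nested Ps b J.
Proof.
elim: m => [|m IH] HJ.
  by move: HJ; rewrite leqn0 => /eqP E; rewrite /nested E.
case: (boolP (#|J| == m.+1)) => [/eqP E|ne]; first by rewrite /nested E.
rewrite nestedn_step ?IH //; lia.
Qed.

Lemma nested_unfold n (Ps : seq {perm 'I_n}) b (J : {set 'I_n}) :
  (0 < #|J|)%N -> nested Ps b J = (#|J| == 1) ||
  [exists J' : {set 'I_n},
     [&& common Ps J', J' \proper J, (#|J| - b <= #|J'|)%N & nested Ps b J']].
Proof.
move=> J0; rewrite /nested.
have [m E] : exists m, #|J| = m.+1 by exists #|J|.-1; lia.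
rewrite {1}E nestedn_S; congr (_ || _); apply: eq_existsb => J'.
case: (boolP (J' \proper J)) => pJ; last by rewrite /= andbF.
rewrite nestedn_fuel //; have := proper_card pJ; lia.
Qed.

Theorem lemma2 (n : nat) (Ps : seq {perm 'I_n}) (b : nat)
  (n_gt0 : (0 < n)%N) (K_gt0 : (0 < size Ps)%N) (P1_id : nth 1%g Ps 0 = 1%g)
  (b_gt0 : (0 < b)%N)
  (I : {set 'I_n}) (HI : P_interval Ps I) (HI2 : (2 <= #|I|)%N) :
  nested Ps b I <->
  exists2 x, x \in children Ps I & nested Ps b x && (#|I| - b <= #|x|)%N.
Proof.
have I0 : (0 < #|I|)%N by apply: leq_trans HI2.
have I1 : (#|I| == 1) = false by apply/negbTE; rewrite neq_ltn HI2 orbT.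
split.
  rewrite nested_unfold // I1 /= => /existsP[J /and4P[cJ JI sJ nJ]].
  case: (sub_child K_gt0 P1_id HI HI2 cJ JI) => C CI JC.
  exists C => //.
  have CIp : C \proper I by move: CI; rewrite inE => /and4P[].
  have sC : (#|J| <= #|C|)%N := subset_leq_card JC.
  rewrite (leq_trans sJ sC) andbT.
  case: (boolP (J == C)) => [/eqP <- //|nJC].
  have JCp : J \proper C by rewrite properEneq nJC JC.
  have C0 : (0 < #|C|)%N by have := proper_card JCp; lia.
  rewrite nested_unfold //; apply/orP; right; apply/existsP; exists J.
  rewrite cJ JCp nJ andbT /=.
  exact: leq_trans (leq_sub2r b (ltnW (proper_card CIp))) sJ.
case=> C CI /andP[nC sC].
move: CI; rewrite inE => /and4P[_ sCs CIp _].
rewrite nested_unfold //; apply/orP; right; apply/existsP; exists C.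
by rewrite strong_common // CIp sC nC.
Qed.
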